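(* Let $A_1,\ldots,A_n$ be events in a probability space, let $X$ be the number of these events that occur, and for $1\le j\le n$ let $S_j=\sum_{1\le i_1<\cdots<i_j\le n}P(A_{i_1}\cdots A_{i_j})$. Let $r,k$ be integers with $1\le r\le k<n$. For $1\le i\le r$ and indices $1\le r_1<\cdots<r_{k+1-i}\le n$, let $$T(r_1,\ldots,r_{k+1-i})=\{(t_1,\ldots,t_i): r_{k+1-i}<t_1<\cdots<t_i\le n\},$$ and let $$M_i=\sum_{1\le r_1<\cdots<r_{k+1-i}\le n}\ \max_{(t_1,\ldots,t_i)\in T(r_1,\ldots,r_{k+1-i})}P(A_{r_1}\cdots A_{r_{k+1-i}}A_{t_1}\cdots A_{t_i}).$$ If $r+k$ is odd, then $$P(X\ge r)\ge\sum_{j=r}^{k}(-1)^{r+j}\binom{j-1}{r-1}S_j+\sum_{i=1}^{r}\binom{k-i}{r-i}M_i,$$ and if $r+k$ is even, then $$P(X\ge r)\le\sum_{j=r}^{k}(-1)^{r+j}\binom{j-1}{r-1}S_j-\sum_{i=1}^{r}\binom{k-i}{r-i}M_i.$$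
   Context: Binomial convention: for integers $s,t$, $\binom{t}{s}=0$ if $\min(s,t)<0$ or $s>t$; otherwise $\binom{t}{s}=\frac{t!}{s!(t-s)!}$. $A_{i_1}\cdots A_{i_j}$ denotes the intersection of the events. A maximum over an empty set $T(\cdot)$ is taken to be $0$. *)

(* Defs.v *)
From HB Require Import structures.
From mathcomp Require Import all_boot all_order all_algebra.
From mathcomp Require Import all_classical all_reals all_analysis.
Set Implicit Arguments. Unset Strict Implicit. Unset Printing Implicit Defensive.
Import Order.TTheory GRing.Theory Num.Theory.
Local Open Scope classical_set_scope.
Local Open Scope ring_scope.

Definition pr d (T : measurableType d) (R : realType) (P : probability T R)
  (E : set T) : R := fine (P E).

(* intersection of the events A_i, i in I (for I = set0 this is setT) *)
Definition inter (T : Type) (n : nat) (A : 'I_n -> set T) (I : {set 'I_n}) : set T :=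
  [set w | forall i, i \in I -> A i w].

Definition count_occ (T : Type) (n : nat) (A : 'I_n -> set T) (w : T) : nat :=
  #|[set i : 'I_n | `[< A i w >]]|.

Definition Ssum d (T : measurableType d) (R : realType) (P : probability T R)
  (n : nat) (A : 'I_n -> set T) (j : nat) : R :=
  \sum_(I : {set 'I_n} | #|I| == j) pr P (inter A I).

(* M_i = sum over (k+1-i)-subsets Rs of max over i-subsets Ts lying entirely
   above max Rs of P(A_Rs A_Ts); empty max = 0 *)
Definition Msum d (T : measurableType d) (R : realType) (P : probability T R)
  (n : nat) (A : 'I_n -> set T) (k i : nat) : R :=
  \sum_(Rs : {set 'I_n} | #|Rs| == (k + 1 - i)%N)
    \big[Num.max/0]_(Ts : {set 'I_n} |
        (#|Ts| == i) && [forall t in Ts, forall s in Rs, (s < t)%N])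
      pr P (inter A (Rs :|: Ts)).

Definition bonf_sum d (T : measurableType d) (R : realType) (P : probability T R)
  (n : nat) (A : 'I_n -> set T) (r k : nat) : R :=
  \sum_(r <= j < k.+1) (-1) ^+ (r + j) * ('C(j.-1, r.-1))%:R * Ssum P A j.

Definition M_corr d (T : measurableType d) (R : realType) (P : probability T R)
  (n : nat) (A : 'I_n -> set T) (r k : nat) : R :=
  \sum_(1 <= i < r.+1) ('C(k - i, r - i))%:R * Msum P A k i.

(* Main.v *)
Require Import Defs.
From HB Require Import structures.
From mathcomp Require Import all_boot all_order all_algebra.
From mathcomp Require Import zify ring lra.
Set Implicit Arguments. Unset Strict Implicit. Unset Printing Implicit Defensive.
Import Order.TTheory GRing.Theory Num.Theory.


Definition Eprime n (i : nat) (E : {set 'I_n}) : {set 'I_n} :=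
  [set x in E | i <= #|[set y in E | x < y]|].

Lemma Eprime_card n i (E : {set 'I_n}) : #|Eprime i E| <= #|E| - i.
Proof.
pose f (x : 'I_n) := #|[set y in E | x < y]|.
have fprop : forall x x', x \in E -> x' \in E -> x < x' -> f x' < f x.
  move=> x x' hx hx' hlt; apply: proper_card; rewrite properE; apply/andP; split.
    apply/subsetP => y; rewrite !inE => /andP[-> h] /=; exact: ltn_trans hlt h.
  apply/subsetPn; exists x'; first by rewrite inE hx' hlt.
  by rewrite inE ltnn andbF.
have fbound : forall x, x \in E -> f x < #|E|.
  move=> x hx; apply: proper_card; rewrite properE; apply/andP; split.
    by apply/subsetP => y; rewrite inE => /andP[].
  by apply/subsetPn; exists x => //; rewrite inE ltnn andbF.
have finj : {in Eprime i E &, injective f}.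
  move=> x x'; rewrite !inE => /andP[hx _] /andP[hx' _] hf.
  case: (ltngtP x x') => hl.
  - by have := fprop _ _ hx hx' hl; rewrite hf ltnn.
  - by have := fprop _ _ hx' hx hl; rewrite hf ltnn.
  - exact: val_inj.
rewrite cardE -(size_map f) -[#|E| - i](size_iota i).
apply: uniq_leq_size.
  by rewrite map_inj_in_uniq ?enum_uniq // => x y; rewrite !mem_enum; apply: finj.
move=> v /mapP[x]; rewrite mem_enum inE => /andP[hx hi] ->.
rewrite mem_iota; have := fbound x hx; rewrite /f in hi *; lia.
Qed.

Lemma sub_Eprime n i (E Rs Ts : {set 'I_n}) :
  Rs \subset E -> Ts \subset E -> #|Ts| = i ->
  [forall t in Ts, forall s in Rs, s < t] -> Rs \subset Eprime i E.
Proof.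
move=> hR hT hc /forallP hall; apply/subsetP => x hx.
rewrite inE (subsetP hR _ hx) /= -hc; apply: subset_leq_card.
apply/subsetP => t ht; rewrite inE (subsetP hT _ ht) /=.
by have := hall t; rewrite ht /= => /forallP /(_ x); rewrite hx.
Qed.


Definition Uf (r k m : nat) : nat :=
  \sum_(1 <= i < r.+1) 'C(k - i, r - i) * 'C(m - i, k + 1 - i).

Lemma sum_shift1 (r : nat) (f : nat -> nat) :
  \sum_(1 <= i < r.+2) f i = f 1 + \sum_(1 <= i < r.+1) f i.+1.
Proof.
rewrite big_ltn // big_add1 /=. done.
Qed.

Lemma T_base r m : 1 <= r ->
  'C(m, r) = (r <= m) + \sum_(1 <= i < r.+1) 'C(m - i, r + 1 - i).
Proof.
elim: r m => // r IH m _.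
case: r IH => [|r] IH.
  rewrite big_nat1 bin1 subn1 bin1 /=. by case: m.
rewrite sum_shift1.
case: m => [|m].
  rewrite bin0n /= big1_seq ?bin0n //=.
  move=> i; rewrite mem_index_iota => /andP[h1 h2]; rewrite sub0n bin0n; case: eqP => //; lia.
rewrite binS (IH m) //.
have -> : \sum_(1 <= i < r.+2) 'C(m.+1 - i.+1, r.+2 + 1 - i.+1)
   = \sum_(1 <= i < r.+2) 'C(m - i, r.+1 + 1 - i).
  apply: eq_bigr => i _; congr 'C(_, _); lia.
rewrite subn1 /=. have -> : r.+2 + 1 - 1 = r.+2 by lia.
rewrite ltnS. lia.
Qed.

Lemma Urec r k m : 1 <= k ->
  Uf r.+1 k m = 'C(k - 1, r) * 'C(m - 1, k) + Uf r (k - 1) (m - 1).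
Proof.
move=> hk; rewrite /Uf.
case: r => [|r].
  by rewrite big_nat1 big_geq // addn0 subnn addnK.
rewrite sum_shift1; congr (_ * _ + _).
- by rewrite addnK.
apply: eq_bigr => i _; congr ('C(_, _) * 'C(_, _)); lia.
Qed.

Lemma binSm1 m k : 1 <= k -> 'C(m - 1, k) + 'C(m - 1, k.+1) = 'C(m, k.+1).
Proof.
move=> hk; case: m => [|m].
  by rewrite !bin0n; case: k hk.
by rewrite subn1 /= [in RHS]binS addnC.
Qed.

Lemma L_step r : 1 <= r -> forall k m, r <= k ->
  Uf r k m + Uf r k.+1 m = 'C(k, r - 1) * 'C(m, k + 1).
Proof.
elim: r => // r IH _ k m hrk.
have hk : 1 <= k by lia.
rewrite !Urec //.
case: r IH hrk => [|r] IH hrk.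
  by rewrite /Uf !big_geq // !addn0 !bin0 !mul1n addn1 binSm1.
have IH' := IH isT (k - 1) (m - 1) ltac:(lia).
have e1 : (k - 1).+1 = k by lia.
have e3 : k - 1 + 1 = k by lia.
have e2 : k.+1 - 1 = k by lia.
rewrite e1 e3 in IH'; rewrite e2.
rewrite !subn1 /= in IH' *.
rewrite addnACA IH'.
have Hp : 'C(k, r.+1) = 'C(k.-1, r.+1) + 'C(k.-1, r).
  by case: k hk {hrk IH IH' e1 e2 e3} => // k _; rewrite binS.
have hb := binSm1 m hk; rewrite subn1 in hb.
rewrite addn1 -hb Hp.
rewrite !mulnDl !mulnDr.
lia.
Qed.

Local Open Scope ring_scope.

Definition Ff (R : ringType) (r k m : nat) : R :=
  \sum_(r <= j < k.+1) (-1) ^+ (r + j) * ('C(j.-1, r.-1))%:R * ('C(m, j))%:R.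

Lemma Id (R : comRingType) r k m : (1 <= r)%N -> (r <= k)%N ->
  ((r <= m)%N)%:R = Ff R r k m + (-1) ^+ (r + k + 1) * (Uf r k m)%:R.
Proof.
move=> hr hrk.
have [b ->] : exists b, k = (r + b)%N by exists (k - r)%N; lia.
elim: b => [|b IH].
  rewrite addn0 /Ff big_nat1.
  have s1 : (-1) ^+ (r + r) = 1 :> R by rewrite -signr_odd oddD addbb.
  have s2 : (-1) ^+ (r + r + 1) = -1 :> R by rewrite exprD s1 expr1 mul1r.
  rewrite s1 s2 binn mul1r.
  have : 'C(m, r) = ((r <= m) + \sum_(1 <= i < r.+1) 'C(m - i, r + 1 - i))%N by exact: T_base.
  rewrite /Uf.
  have -> : (\sum_(1 <= i < r.+1) 'C(r - i, r - i) * 'C(m - i, r + 1 - i))%N =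
     \sum_(1 <= i < r.+1) 'C(m - i, r + 1 - i).
    by apply: eq_bigr => i _; rewrite binn mul1n.
  move=> ->; rewrite natrD; ring.
have HL := L_step hr m (leq_addr b r).
rewrite subn1 addn1 in HL.
rewrite /Ff big_nat_recr /=; last by lia.
rewrite -/(Ff R r (r + b) m) addnS.
have -> : (Uf r (r + b).+1 m) = ('C(r + b, r.-1) * 'C(m, (r + b).+1) - Uf r (r + b) m)%N by lia.
rewrite natrB; last by lia.
rewrite natrM IH /Ff /=.
rewrite (_ : (r + (r + b).+1 + 1)%N = (r + (r + b) + 1).+1)%N; last by lia.
rewrite (_ : (r + (r + b).+1)%N = (r + (r + b) + 1)%N); last by lia.
rewrite exprS. ring.
Qed.

From mathcomp Require Import all_classical all_reals all_analysis.
Import Order.TTheory GRing.Theory Num.Theory.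
Local Open Scope classical_set_scope.
Local Open Scope ring_scope.
Local Open Scope ring_scope.

Definition pat (T : Type) n (A : 'I_n -> set T) (w : T) : {set 'I_n} :=
  [set i | `[< A i w >]].

Definition Bset (T : Type) n (A : 'I_n -> set T) (E : {set 'I_n}) : set T :=
  [set w | pat A w = E].

Lemma pat_in (T : Type) n (A : 'I_n -> set T) w i : (i \in pat A w) = `[< A i w >].
Proof. by rewrite inE. Qed.

Lemma mBset d (T : measurableType d) n (A : 'I_n -> set T)
  (mA : forall i, measurable (A i)) (E : {set 'I_n}) : measurable (Bset A E).
Proof.
have H : forall s : seq 'I_n,
    measurable [set w | all (fun i => (i \in pat A w) == (i \in E)) s].
  elim => [|i s IH] /=.
    rewrite (_ : [set w | true] = setT); first exact: measurableT.
    by apply/seteqP; split => w.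
  rewrite (_ : [set w | ((i \in pat A w) == (i \in E)) && all _ s] =
      (if i \in E then A i else ~` A i) `&` [set w | all (fun i => (i \in pat A w) == (i \in E)) s]).
    apply: measurableI => //; case: (i \in E) => //; exact: measurableC.
  apply/seteqP; split => w /=; rewrite pat_in.
    move=> /andP[h1 h2]; split => //.
    by case: (i \in E) h1; case: asboolP.
  move=> [h1 h2]; rewrite h2 andbT.
  by case: (i \in E) h1; case: asboolP.
rewrite (_ : Bset A E = [set w | all (fun i => (i \in pat A w) == (i \in E)) (enum 'I_n)]);
  first exact: H.
apply/seteqP; split => w /=.
  by rewrite /Bset /= => ->; apply/allP => i _.
move=> /allP h; apply/setP => i; apply/eqP; apply: h; exact: mem_enum.
Qed.

Lemma pr_union_seq d (T : measurableType d) (R : realType) (P : probability T R)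
  n (A : 'I_n -> set T) (mA : forall i, measurable (A i)) (Q : pred {set 'I_n})
  (s : seq {set 'I_n}) : uniq s ->
  measurable [set w | (pat A w \in s) && Q (pat A w)] /\
  pr P [set w | (pat A w \in s) && Q (pat A w)] = \sum_(E <- s | Q E) pr P (Bset A E).
Proof.
elim: s => [|E s IH] /=.
  move=> _; rewrite big_nil.
  rewrite (_ : [set w | false] = set0); last by apply/seteqP; split => w.
  by split => //; rewrite /pr measure0.
move=> /andP[hE hu]; have [m1 e1] := IH hu.
rewrite big_cons; case hQ: (Q E).
  have Heq : [set w | (pat A w \in E :: s) && Q (pat A w)] =
      Bset A E `|` [set w | (pat A w \in s) && Q (pat A w)].
    apply/seteqP; split => w /=; rewrite in_cons.
      case/andP => /orP[/eqP h|h] hq; [by left | by right; rewrite h hq].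
    case=> [h|/andP[h hq]]; last by rewrite h hq orbT.
    by rewrite /Bset /= in h; rewrite h eqxx hQ.
  have hdisj : Bset A E `&` [set w | (pat A w \in s) && Q (pat A w)] = set0.
    apply/seteqP; split => w //= [h /andP[h1 _]].
    by rewrite /Bset /= in h; rewrite h (negbTE hE) in h1.
  rewrite Heq; split; first exact: measurableU (mBset mA E) m1.
  rewrite /pr measureU //; last exact: mBset.
  rewrite fineD; first by rewrite -e1.
    by apply: fin_num_measure; exact: mBset.
  by apply: fin_num_measure.
have Heq : [set w | (pat A w \in E :: s) && Q (pat A w)] =
    [set w | (pat A w \in s) && Q (pat A w)].
  apply/seteqP; split => w /=; rewrite in_cons.
    case/andP => /orP[/eqP h|h] hq; last by rewrite h hq.
    by rewrite h hQ in hq.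
  by case/andP => -> ->; rewrite orbT.
by rewrite Heq.
Qed.

Lemma pr_pat d (T : measurableType d) (R : realType) (P : probability T R)
  n (A : 'I_n -> set T) (mA : forall i, measurable (A i)) (Q : pred {set 'I_n}) :
  pr P [set w | Q (pat A w)] = \sum_(E | Q E) pr P (Bset A E).
Proof.
have [_ h] := pr_union_seq P mA Q (index_enum_uniq {set 'I_n}).
rewrite -h; congr (pr P _); apply/seteqP; split => w /=.
  by move=> ->; rewrite mem_index_enum.
by case/andP.
Qed.

Lemma pr_ge0 d (T : measurableType d) (R : realType) (P : probability T R) (X : set T) :
  0 <= pr P X.
Proof. by apply: fine_ge0; apply: measure_ge0. Qed.

Local Open Scope ring_scope.

Lemma count_occE T n (A : 'I_n -> set T) w : count_occ A w = #|pat A w|.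
Proof. apply: eq_card => i; rewrite /pat [in RHS]inE; apply/idP/idP => h.
  by rewrite in_setE in h.
by rewrite in_setE.
Qed.

Lemma pr_inter d (T : measurableType d) (R : realType) (P : probability T R)
  n (A : 'I_n -> set T) (mA : forall i, measurable (A i)) (I : {set 'I_n}) :
  pr P (inter A I) = \sum_(E : {set 'I_n} | I \subset E) pr P (Bset A E).
Proof.
rewrite -(pr_pat P mA (fun E => I \subset E)); congr (pr P _).
apply/seteqP; split => w /=.
  move=> h /=; apply/fintype.subsetP => i hi; rewrite pat_in; apply/asboolP; exact: h.
move=> /= /fintype.subsetP h i hi; by have := h i hi; rewrite pat_in => /asboolP.
Qed.

Lemma sum_if (R : realType) (X : finType) (a b : pred X) (c : R) :
  \sum_(x | a x) (if b x then c else 0) = (#|[set x | b x & a x]|)%:R * c.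
Proof.
rewrite -big_mkcondr (eq_bigl (fun x => x \in [set x | b x & a x])).
  by rewrite sumr_const mulr_natl.
by move=> x; rewrite inE andbC.
Qed.

Lemma Ssum_eq d (T : measurableType d) (R : realType) (P : probability T R)
  n (A : 'I_n -> set T) (mA : forall i, measurable (A i)) j :
  Ssum P A j = \sum_(E : {set 'I_n}) pr P (Bset A E) * ('C(#|E|, j))%:R.
Proof.
rewrite /Ssum.
under eq_bigr => I _ do rewrite pr_inter // big_mkcond.
rewrite exchange_big; apply: eq_bigr => E _.
by rewrite sum_if cards_draws mulrC.
Qed.

Lemma bonf_eq d (T : measurableType d) (R : realType) (P : probability T R)
  n (A : 'I_n -> set T) (mA : forall i, measurable (A i)) r k :
  bonf_sum P A r k = \sum_(E : {set 'I_n}) pr P (Bset A E) * Ff R r k #|E|.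
Proof.
rewrite /bonf_sum /Ff.
under eq_bigr => j _ do rewrite Ssum_eq // mulr_sumr.
rewrite exchange_big; apply: eq_bigr => E _.
rewrite mulr_sumr; apply: eq_bigr => j _; ring.
Qed.

Lemma ind_eq d (T : measurableType d) (R : realType) (P : probability T R)
  n (A : 'I_n -> set T) (mA : forall i, measurable (A i)) r :
  pr P [set w | (r <= count_occ A w)%N] = \sum_(E : {set 'I_n}) pr P (Bset A E) * ((r <= #|E|)%N)%:R.
Proof.
transitivity (pr P [set w | (r <= #|pat A w|)%N]).
  by congr (pr P _); apply/seteqP; split => w /=; rewrite count_occE.
have := pr_pat P mA (fun E => (r <= #|E|)%N); rewrite /= => ->.
rewrite big_mkcond; apply: eq_bigr => E _.
by case: (r <= #|E|)%N; rewrite ?mulr1 ?mulr0.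
Qed.

Lemma Msum_le d (T : measurableType d) (R : realType) (P : probability T R)
  n (A : 'I_n -> set T) (mA : forall i, measurable (A i)) k i :
  Msum P A k i <= \sum_(E : {set 'I_n}) pr P (Bset A E) * ('C(#|E| - i, k + 1 - i))%:R.
Proof.
rewrite /Msum.
apply: (@le_trans _ _ (\sum_(Rs : {set 'I_n} | #|Rs| == (k + 1 - i)%N)
     \sum_(E : {set 'I_n} | Rs \subset Eprime i E) pr P (Bset A E))).
  apply: ler_sum => Rs _.
  apply: bigmax_le.
    by apply: sumr_ge0 => E _; apply: pr_ge0.
  move=> Ts /andP[/eqP hc hall].
  rewrite pr_inter // big_mkcond [leRHS]big_mkcond; apply: ler_sum => E _.
  case h1: (Rs :|: Ts \subset E); case h2: (Rs \subset Eprime i E) => //.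
  - have [hR hT] : Rs \subset E /\ Ts \subset E.
      by move: h1; rewrite finset.subUset => /andP[].
    by rewrite (sub_Eprime hR hT hc hall) in h2.
  - exact: pr_ge0.
under eq_bigr => Rs _ do rewrite big_mkcond.
rewrite exchange_big; apply: ler_sum => E _.
rewrite sum_if cards_draws mulrC; apply: ler_wpM2l; first exact: pr_ge0.
by rewrite ler_nat; apply: leq_bin2l; apply: Eprime_card.
Qed.

Lemma Mcorr_le d (T : measurableType d) (R : realType) (P : probability T R)
  n (A : 'I_n -> set T) (mA : forall i, measurable (A i)) r k :
  M_corr P A r k <= \sum_(E : {set 'I_n}) pr P (Bset A E) * (Uf r k #|E|)%:R.
Proof.
rewrite /M_corr.
apply: (@le_trans _ _ (\sum_(1 <= i < r.+1) ('C(k - i, r - i))%:R *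
    \sum_(E : {set 'I_n}) pr P (Bset A E) * ('C(#|E| - i, k + 1 - i))%:R)).
  apply: ler_sum => i _; apply: ler_wpM2l; first exact: ler0n.
  exact: Msum_le.
under eq_bigr => i _ do rewrite mulr_sumr.
rewrite exchange_big le_eqVlt; apply/orP; left; apply/eqP; apply: eq_bigr => E _.
rewrite /Uf natr_sum mulr_sumr; apply: eq_bigr => i _; rewrite natrM; ring.
Qed.

Theorem theorem4 (d : measure_display) (T : measurableType d) (R : realType)
  (P : probability T R) (n : nat) (A : 'I_n -> set T)
  (mA : forall i, measurable (A i)) (r k : nat)
  (hr : (1 <= r)%N) (hrk : (r <= k)%N) (hkn : (k < n)%N) :
  (odd (r + k) ->
    bonf_sum P A r k + M_corr P A r k <= pr P [set w | (r <= count_occ A w)%N]) /\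
  (~~ odd (r + k) ->
    pr P [set w | (r <= count_occ A w)%N] <= bonf_sum P A r k - M_corr P A r k).
Proof.
have MZ := Mcorr_le P mA r k.
set Z := \sum_(E : {set 'I_n}) pr P (Bset A E) * (Uf r k #|E|)%:R in MZ.
have Hind : pr P [set w | (r <= count_occ A w)%N] =
    bonf_sum P A r k + (-1) ^+ (r + k + 1) * Z.
  rewrite ind_eq // bonf_eq // /Z mulr_sumr -big_split; apply: eq_bigr => E _ /=.
  rewrite (Id R #|E| hr hrk); ring.
rewrite Hind; split => hodd.
  have -> : (-1) ^+ (r + k + 1) = 1 :> R.
    by rewrite -signr_odd oddD hodd.
  by rewrite mul1r lerD2l.
have -> : (-1) ^+ (r + k + 1) = -1 :> R.
  by rewrite -signr_odd oddD (negbTE hodd).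
lra.
Qed.
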